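(* Let $e\ge4$, let $I\subseteq\mathbb Z$ be a union of $c$ congruence classes modulo $e$ with $2\le c\le e-2$, put $\bar c=e-c$, and fix $u$ with $0\le u\le n$. Suppose $\nu$ is an $I$-separated $(u,I)$-partition such that $\nu_{\bar I}$ is not $\bar c$-restricted, and let $s\ge1$ be minimal with $(\nu_{\bar I})_s-(\nu_{\bar I})_{s+1}\ge\bar c$. Let $\tau$ be the partition with $\tau_r=(\nu_{\bar I})_r-\bar c$ for $r\le s$ and $\tau_r=(\nu_{\bar I})_r$ for $r>s$ (so $\nu_{\bar I}=(1^s)\,\|_{\bar c}\,\tau$). Define the $(u,I)$-partition $\xi$ by $\xi_I=(s)\,\|_c\,\nu_I$ (the partition whose parts are the parts of $\nu_I$ together with $c$ copies of $s$) and $\xi_{\bar I}=\tau$. Then $\nu$ and $\xi$ are $(e,\bar c)$-equivalent.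
   Context: $\bar I=\mathbb Z\setminus I$. Fix a large integer $n$ divisible by $e$; abacus displays have $n$ beads: the display of $\lambda$ is the set of occupied positions $\{\lambda_r+r-1:1\le r\le n\}\subseteq\mathbb Z_{\ge0}$, and a set of $N$ occupied positions $b_1>\dots>b_N$ determines the partition with parts $b_r+r-N$. Discarding positions not in $I$ and relabelling the rest $0,1,2,\dots$ in increasing order gives the display of a partition $\lambda_I$; discarding positions in $I$ gives $\lambda_{\bar I}$. $\lambda$ is a $(u,I)$-partition if exactly $u$ of its $n$ beads lie in positions in $I$; such a partition is determined by $(\lambda_I,\lambda_{\bar I})$, and any pair of partitions arises. $\lambda$ is $I$-separated if the first empty position in $I$ comes after the last occupied position in $\bar I$. For partitions $\alpha,\beta$: $\alpha\,\|_{\bar c}\,\beta=(\bar c\alpha_1+\beta_1,\bar c\alpha_2+\beta_2,\dots)$, and $\alpha\,\|_c\,\beta$ is the partition formed by the parts of $\beta$ together with $c$ copies of each part of $\alpha$, in decreasing order. A partition is $k$-restricted if $\lambda_r-\lambda_{r+1}<k$ for all $r$. $(e,\bar c)$-ladders are the sets $\{(r+k(\bar c-e),c'+k\bar c):k\in\mathbb Z\}$ for $(r,c')\in\mathbb Z^2$, and two partitions are $(e,\bar c)$-equivalent if they have the same number of nodes in every $(e,\bar c)$-ladder. *)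

(* Defs.v *)
From HB Require Import structures.
From mathcomp Require Import all_boot all_order all_algebra.
From mathcomp Require Import boolp.
Set Implicit Arguments. Unset Strict Implicit. Unset Printing Implicit Defensive.
Import Order.TTheory GRing.Theory Num.Theory.

(* A partition is a nonincreasing sequence of positive naturals.
   pt la r is the part la_r (1-indexed), 0 beyond the length. *)
Definition is_partition (la : seq nat) : bool :=
  sorted geq la && all (fun x => 0 < x) la.

Definition pt (la : seq nat) (r : nat) : nat := nth 0 la r.-1.

(* Abacus display of la with n beads: positions la_r + n - r, 1 <= r <= n. *)
Definition display (n : nat) (la : seq nat) : seq nat :=
  [seq pt la r.+1 + (n - r.+1) | r <- iota 0 n].

(* Partition determined by a set of N occupied positions b_1 > ... > b_N:
   parts b_r + r - N (zero parts discarded). *)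
Definition part_of_beads (B : seq nat) : seq nat :=
  let bs := sort geq B in
  let N := size bs in
  [seq x <- [seq nth 0 bs r + r.+1 - N | r <- iota 0 N] | 0 < x].

(* relabelling of positions in P : keep P-positions, relabel 0,1,2,... *)
Definition relabel (P : pred nat) (p : nat) : nat := count P (iota 0 p).

Definition inI (I : pred int) : pred nat := fun p => I (Posz p).

Definition I_part (I : pred int) (n : nat) (la : seq nat) : seq nat :=
  part_of_beads [seq relabel (inI I) p | p <- display n la & inI I p].
Definition barI_part (I : pred int) (n : nat) (la : seq nat) : seq nat :=
  part_of_beads [seq relabel (predC (inI I)) p | p <- display n la & ~~ inI I p].

Definition uI_partition (I : pred int) (n u : nat) (la : seq nat) : Prop :=
  count (inI I) (display n la) = u.

Definition I_separated (I : pred int) (n : nat) (la : seq nat) : Prop :=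
  forall p q : nat, inI I p -> p \notin display n la ->
    ~~ inI I q -> q \in display n la -> q < p.

Definition parcat (c : nat) (alpha beta : seq nat) : seq nat :=
  sort geq (beta ++ flatten [seq nseq c a | a <- alpha]).

Definition tau (cb s : nat) (nb : seq nat) : seq nat :=
  [seq x <- [seq (if r < s then nth 0 nb r - cb else nth 0 nb r)
            | r <- iota 0 (size nb)] | 0 < x].

Definition nodes (la : seq nat) : seq (int * int) :=
  [seq (Posz i.+1, Posz j.+1) | i <- iota 0 (size la), j <- iota 0 (nth 0 la i)].

Definition in_ladder (e cb : nat) (r c' : int) (x : int * int) : bool :=
  `[< exists k : int, x.1 = (r + k * (Posz cb - Posz e))%R
                   /\ x.2 = (c' + k * Posz cb)%R >].

Definition ladder_equiv (e cb : nat) (la mu : seq nat) : Prop :=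
  forall r c' : int,
    count (in_ladder e cb r c') (nodes la) = count (in_ladder e cb r c') (nodes mu).

(* Main.v *)
Require Import Defs.
From HB Require Import structures.
From mathcomp Require Import all_boot all_order all_algebra.
From mathcomp Require Import boolp.
From mathcomp Require Import zify ring.
Set Implicit Arguments. Unset Strict Implicit. Unset Printing Implicit Defensive.

Lemma iotaSr m n : iota m n.+1 = iota m n ++ [:: m + n].
Proof. by rewrite -addn1 iotaD. Qed.

Lemma down_all (P : pred nat) N :
  (forall i, i.+1 < N.+1 -> P i.+1 -> P i) -> P N -> forall i, i <= N -> P i.
Proof.
move=> hd hN i hi.
have: forall k, k <= N -> P (N - k).
  elim=> [|k IH] hk; first by rewrite subn0.
  have hk' : k <= N by lia.
  have := IH hk'. 
  have -> : N - k = (N - k.+1).+1 by lia.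
  apply: hd; lia.
move/(_ (N - i)); rewrite subKn //; apply; lia.
Qed.

Lemma cnt_prefix (P : pred nat) N :
  (forall i, i.+1 < N -> P i.+1 -> P i) ->
  forall t, (t <= count P (iota 0 N)) = (t == 0) || ((t <= N) && P t.-1).
Proof.
elim: N => [|N IH] hd t.
  by rewrite /=; case: t.
rewrite iotaSr count_cat /= add0n addn0.
have hd' : forall i, i.+1 < N -> P i.+1 -> P i by move=> i hi; apply: hd; lia.
case hPN: (P N).
- have hall := down_all hd hPN.
  have -> : count P (iota 0 N) = N.
    rewrite -[RHS](size_iota 0 N) -count_predT.
    apply: eq_in_count => i; rewrite mem_iota => /andP[_ hi]; rewrite hall //; lia.
  case: t => [|t] //=.
  rewrite addn1 ltnS; case h: (t <= N) => //=; by rewrite hall.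
- rewrite /= addn0 IH //.
  case: t => [|t] //=.
  case: (ltnP t N) => hlt.
    by rewrite ltnS (ltnW hlt).
  case: (t =P N) => [->|hne].
    by rewrite hPN /= andbF.
  have h : N < t by lia.
  by rewrite ltnS leqNgt h.
Qed.

Section Rel.
Variables (P : pred nat) (e : nat).
Hypothesis hP : forall p, P (p + e) = P p.

Lemma cnt_window m : count P (iota m e) = count P (iota 0 e).
Proof.
elim: m => [//|m IH].
rewrite -IH.
case: e hP => [|e'] hP'; first by [].
rewrite iotaSr /= count_cat /= addn0.
have -> : m.+1 + e' = m + e'.+1 by lia.
by rewrite hP' addnC.
Qed.

Lemma relabel_addE x : relabel P (x + e) = relabel P x + count P (iota 0 e).
Proof. by rewrite /relabel iotaD count_cat add0n cnt_window. Qed.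

Lemma relabel_addmul x d : relabel P (x + e * d) = relabel P x + d * count P (iota 0 e).
Proof.
elim: d => [|d IH]; first by rewrite muln0 mul0n !addn0.
have -> : x + e * d.+1 = (x + e * d) + e by rewrite mulnS; lia.
rewrite relabel_addE IH mulSn; lia.
Qed.

End Rel.

Lemma relabel_mono (P : pred nat) x y : x <= y -> relabel P x <= relabel P y.
Proof.
move=> h; rewrite /relabel -(subnKC h) iotaD count_cat; exact: leq_addr.
Qed.

Lemma relabelS (P : pred nat) x : relabel P x.+1 = relabel P x + P x.
Proof. by rewrite /relabel iotaSr count_cat /= add0n addn0. Qed.

Lemma relabel_le (P : pred nat) x p : P p -> (x <= p) = (relabel P x <= relabel P p).
Proof.
move=> hp; apply/idP/idP; first exact: relabel_mono.
apply: contraLR; rewrite -!ltnNge => h.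
apply: (leq_trans _ (relabel_mono P h)).
by rewrite relabelS hp addn1.
Qed.

Lemma relabel_split (P : pred nat) x : relabel P x + relabel (predC P) x = x.
Proof. by rewrite /relabel count_predC size_iota. Qed.

Lemma geq_trans : transitive geq.
Proof. by move=> a b c /= h1 h2; apply: leq_trans h2 h1. Qed.

Lemma sorted_geq_nth (L : seq nat) i j : sorted geq L -> i <= j -> nth 0 L j <= nth 0 L i.
Proof.
move=> hs hij.
case: (ltnP j (size L)) => hj; last by rewrite nth_default.
have := sorted_leq_nth geq_trans (fun x => leqnn x) 0 hs.
move/(_ i j); rewrite !inE; apply => //; lia.
Qed.

Lemma sorted_gtn_nth (L : seq nat) i j : sorted gtn L -> i < j < size L -> nth 0 L j < nth 0 L i.
Proof.
move=> hs /andP[hij hj].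
have gtn_trans : transitive gtn by move=> a b c /= h1 h2; apply: ltn_trans h2 h1.
have := sorted_ltn_nth gtn_trans 0 hs.
move/(_ i j); rewrite !inE; apply => //; lia.
Qed.

Lemma sorted_gtn_geq (L : seq nat) : sorted gtn L -> sorted geq L.
Proof. apply: sub_sorted => a b /= h; exact: ltnW. Qed.

Lemma sorted_gtn_lb (L : seq nat) i : sorted gtn L -> i < size L -> size L - i.+1 <= nth 0 L i.
Proof.
elim: L i => [//|x L IH] i /= hs hi.
have hL : sorted gtn L by case: L hs {IH hi} => //= y L /andP[].
case: i hi => [|i] hi /=.
  case: L hs hL IH {hi} => [|y L] //= /andP[hxy _] hL IH.
  have := IH 0 hL (ltn0Sn _); rewrite /= => h; lia.
have := IH i hL; rewrite /=; lia.
Qed.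

Lemma sorted_iota_gtn (f : nat -> nat) m k :
  (forall i, m <= i -> i.+1 < m + k -> f i.+1 < f i) -> sorted gtn (map f (iota m k)).
Proof.
elim: k m => [//|k IH] m hf /=.
case: k IH hf => [//|k] IH hf /=.
apply/andP; split; first by apply: hf; lia.
have := IH m.+1; rewrite /=; apply => i h1 h2; apply: hf; lia.
Qed.

Lemma filter_pos_nth (L : seq nat) i : sorted geq L -> nth 0 [seq x <- L | 0 < x] i = nth 0 L i.
Proof.
elim: L i => [//|x L IH] i hs /=.
have hL : sorted geq L by case: L hs {IH} => //= y L /andP[].
case: (posnP x) => hx.
- subst x.
  have hall : all (fun y => y == 0) L.
    have := order_path_min geq_trans hs.
    apply: sub_all => y /=; lia.
  have -> : [seq x <- L | 0 < x] = [::].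
    elim: L hall {IH hs hL} => //= y L IH /andP[/eqP -> h]; exact: IH.
  rewrite nth_nil; case: i => //= i.
  case: (ltnP i (size L)) => hi; last by rewrite nth_default.
  by move/allP: hall => /(_ (nth 0 L i) (mem_nth 0 hi)) /eqP ->.
- by case: i => [|i] //=; apply: IH.
Qed.

(* the M function: number of beads >= w in the display of g with N beads *)
Definition M (g : seq nat) (N w : nat) : nat :=
  count (fun i => w <= nth 0 g i + (N - i.+1)) (iota 0 N).

Lemma M_ge (g : seq nat) N w t : sorted geq g ->
  (t <= M g N w) = (t == 0) || (t <= N) && (w <= nth 0 g t.-1 + (N - t)).
Proof.
move=> hs; rewrite /M cnt_prefix.
  by case: t.
move=> i hi h.
have := sorted_geq_nth hs (leqnSn i); lia.
Qed.

Lemma prefix_count (L : seq nat) th i : sorted geq L -> 0 < th ->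
  (th <= nth 0 L i) = (i < count (fun x => th <= x) L).
Proof.
move=> hs hth.
rewrite -{2}(mkseq_nth 0 L) /mkseq count_map cnt_prefix /=.
  case: (ltnP i (size L)) => hi; first by [].
  by rewrite nth_default // leqNgt hth.
move=> j hj h; apply: leq_trans h _; exact: sorted_geq_nth.
Qed.

Lemma sorted_iota_geq (f : nat -> nat) m k :
  (forall i, m <= i -> i.+1 < m + k -> f i.+1 <= f i) -> sorted geq (map f (iota m k)).
Proof.
elim: k m => [//|k IH] m hf /=.
case: k IH hf => [//|k] IH hf /=.
apply/andP; split; first by apply: hf; lia.
have := IH m.+1; rewrite /=; apply => i h1 h2; apply: hf; lia.
Qed.

Lemma pob_eq (B : seq nat) : sorted gtn B ->
  part_of_beads B = [seq x <- [seq nth 0 B r + r.+1 - size B | r <- iota 0 (size B)] | 0 < x].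
Proof. by move=> hs; rewrite /part_of_beads (sorted_sort geq_trans (sorted_gtn_geq hs)). Qed.

Lemma pob_nth (B : seq nat) i : sorted gtn B ->
  nth 0 (part_of_beads B) i = if i < size B then nth 0 B i + i.+1 - size B else 0.
Proof.
move=> hs; rewrite pob_eq // filter_pos_nth.
  case: (ltnP i (size B)) => hi.
    by rewrite (nth_map 0) ?size_iota // nth_iota.
  by rewrite nth_default // size_map size_iota.
apply: sorted_iota_geq => j _ hj.
have := sorted_gtn_nth hs (i:=j) (j:=j.+1); rewrite add0n in hj.
move/(_ ltac:(lia)); lia.
Qed.

Lemma pob_sorted (B : seq nat) : sorted gtn B -> sorted geq (part_of_beads B).
Proof.
move=> hs; rewrite pob_eq //; apply: sorted_filter; first exact: geq_trans.
apply: sorted_iota_geq => j _ hj.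
have := sorted_gtn_nth hs (i:=j) (j:=j.+1); rewrite add0n in hj.
move/(_ ltac:(lia)); lia.
Qed.

Lemma pob_size (B : seq nat) : size (part_of_beads B) <= size B.
Proof.
rewrite /part_of_beads /= size_filter.
apply: leq_trans (count_size _ _) _.
by rewrite size_map size_iota size_sort.
Qed.

Lemma pob_pos (B : seq nat) i : i < size (part_of_beads B) -> 0 < nth 0 (part_of_beads B) i.
Proof.
move=> hi; have := mem_nth 0 hi; rewrite /part_of_beads /= mem_filter.
by case/andP.
Qed.

Section Abacus.
Variables (n : nat) (la : seq nat).
Hypotheses (hla : is_partition la) (hsz : size la <= n).

Lemma la_sorted : sorted geq la.
Proof. by case/andP: hla. Qed.

Lemma display_map : display n la = map (fun i => nth 0 la i + (n - i.+1)) (iota 0 n).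
Proof. by rewrite /display; apply: eq_map => r; rewrite /pt. Qed.

Lemma display_sorted : sorted gtn (display n la).
Proof.
rewrite display_map; apply: sorted_iota_gtn => i _ hi.
have := sorted_geq_nth la_sorted (leqnSn i); lia.
Qed.

Lemma display_size : size (display n la) = n.
Proof. by rewrite display_map size_map size_iota. Qed.

Lemma row_ge y i : i < n ->
  (y <= nth 0 la i) = (i.+1 <= count (fun p => y + (n - i.+1) <= p) (display n la)).
Proof.
move=> hi; rewrite display_map count_map cnt_prefix /=.
  rewrite hi /=; lia.
move=> j hj h.
have := sorted_geq_nth la_sorted (leqnSn j); lia.
Qed.

Lemma split_count (P : pred nat) x :
  count (fun p => P p && (x <= p)) (display n la) =
  M (part_of_beads [seq relabel P p | p <- display n la & P p])
    (count P (display n la)) (relabel P x).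
Proof.
set D := display n la.
set DP := [seq relabel P p | p <- D & P p].
have hDP : sorted gtn DP.
  rewrite /DP sorted_map.
  apply: (@sub_in_sorted _ P gtn).
  - move=> a b ha hb /= hab.
    have hb' : P b := hb.
    have := relabel_mono P hab; rewrite relabelS hb' addn1 /=; lia.
  - exact: filter_all.
  - apply: sorted_filter; last exact: display_sorted.
    by move=> a b c /= h1 h2; apply: ltn_trans h2 h1.
set N := count P D.
have hsz' : size DP = N by rewrite size_map size_filter.
have hnth : forall i, i < N -> nth 0 DP i = nth 0 (part_of_beads DP) i + (N - i.+1).
  move=> i hi; rewrite pob_nth // hsz' hi.
  have := sorted_gtn_lb hDP (i:=i); rewrite hsz' => /(_ hi); lia.
have hDPeq : DP = map (fun i => nth 0 (part_of_beads DP) i + (N - i.+1)) (iota 0 N).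
  rewrite -{1}(mkseq_nth 0 DP) hsz' /mkseq; apply/eq_in_map => i.
  rewrite mem_iota => /andP[_ hi]; apply: hnth; lia.
have -> : count (fun p => P p && (x <= p)) D = count (fun q => relabel P x <= q) DP.
  rewrite /DP count_map count_filter; apply: eq_in_count => p _ /=.
  case hp: (P p) => /=; last by rewrite andbF.
  by rewrite andbT -relabel_le.
by rewrite [in LHS]hDPeq count_map.
Qed.

End Abacus.

Lemma count_addP (T : Type) (a b c : pred T) (s : seq T) :
  (forall x, (a x : nat) = b x + c x) -> count a s = count b s + count c s.
Proof. move=> h; elim: s => //= x s ->; rewrite h; lia. Qed.

Lemma count_add2 (T : Type) (a b c d : pred T) (s : seq T) :
  (forall x, (a x : nat) + b x = c x + d x) -> count a s + count b s = count c s + count d s.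
Proof. move=> h; elim: s => //= x s IH; have := h x; lia. Qed.

Lemma count_one (P : pred nat) K d0 : d0 < K -> (forall d, d < K -> P d = (d == d0)) ->
  count P (iota 0 K) = 1.
Proof.
move=> hd0 h.
rewrite (@eq_in_count _ _ (pred1 d0)); last first.
  by move=> d; rewrite mem_iota => /andP[_ hd]; rewrite h.
by rewrite count_uniq_mem ?iota_uniq // mem_iota hd0.
Qed.

Lemma count_zero (P : pred nat) K : (forall d, d < K -> P d = false) -> count P (iota 0 K) = 0.
Proof.
move=> h; apply/eqP; rewrite -leqn0 leqNgt -has_count; apply/hasP => -[d].
by rewrite mem_iota => /andP[_ hd]; rewrite h.
Qed.

Lemma M_full (a : seq nat) u w : sorted geq a -> size a <= u - w -> w <= u -> M a u w = u - w.
Proof.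
move=> ha hsz hw; apply/eqP; rewrite eqn_leq; apply/andP; split.
  rewrite leqNgt; apply/negP; rewrite -[_ < _]/(_.+1 <= _) M_ge //= => /andP[h1 h2].
  rewrite nth_default in h2; lia.
rewrite M_ge //; case: (u - w =P 0) => [-> //| hne].
apply/orP; right; apply/andP; split; first lia.
lia.
Qed.

Lemma arith2 (c d q r a i1 : nat) : 0 < c -> r < c -> i1 - a = q * c + r -> d * c <= i1 -> a <= i1 ->
  (a <= i1 - c * d) && (i1 - c * d < a + c) = (d == q).
Proof.
move=> h0 hr E h1 h2.
apply/andP/eqP.
- case=> hA hB.
  have : c * d <= q * c + r by lia.
  have : q * c + r < c * d + c by lia.
  nia.
- move=> ->; lia.
Qed.
Lemma arith1 (B z cb d d1 r : nat) : 0 < cb -> cb <= B -> z <= B -> B - z = d1 * cb + r -> r < cb ->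
  ((B - cb < z + d * cb) && (z + d * cb <= B)) = (d == d1).
Proof.
move=> h0 h1 h2 E hr.
apply/andP/eqP.
- case=> hA hB.
  have : d * cb <= d1 * cb + r by lia.
  have : d1 * cb + r < d * cb + cb by lia.
  nia.
- move=> ->; lia.
Qed.

Section Core.
Variables (e c n u s : nat) (PI : pred nat).
Hypothesis hPI : forall p, PI (p + e) = PI p.
Hypothesis hc : count PI (iota 0 e) = c.
Hypothesis hce : c < e.
Hypothesis hc0 : 0 < c.
Hypothesis hun : u <= n.

Definition PB := predC PI.
Definition cb := e - c.

Lemma hPB : forall p, PB (p + e) = PB p.
Proof. by move=> p; rewrite /PB /= hPI. Qed.

Lemma hcb : count PB (iota 0 e) = cb.
Proof. have := count_predC PI (iota 0 e); rewrite size_iota hc /cb /PB; lia. Qed.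

Lemma rI_add x d : relabel PI (x + e * d) = relabel PI x + d * c.
Proof. by rewrite relabel_addmul // hc. Qed.

Lemma rB_add x d : relabel PB (x + e * d) = relabel PB x + d * cb.
Proof. by rewrite relabel_addmul ?hcb //; exact: hPB. Qed.

Variables (al be al' be' : seq nat).
Hypotheses (hal : sorted geq al) (hbe : sorted geq be) (hal' : sorted geq al') (hbe' : sorted geq be').
Hypotheses (hszal : size al <= u) (hszal' : size al' <= u).
Hypothesis hsep : forall x, 0 < M be (n - u) (relabel PB x) -> relabel PI x + size al <= u.
Hypothesis hsep' : forall x, 0 < M be' (n - u) (relabel PB x) -> relabel PI x + size al' <= u.
Hypothesis hcnt : forall th, 0 < th ->
  count (fun x => th <= x) al' = count (fun x => th <= x) al + (th <= s) * c.
Hypothesis hbenth : forall i, nth 0 be' i = if i < s then nth 0 be i - cb else nth 0 be i.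
Hypotheses (hs1 : 0 < s) (hsN : s <= n - u) (hgap : cb + nth 0 be s <= nth 0 be s.-1).

Variables (i1 y1 : nat).
Hypotheses (hi1 : i1 < n) (hy1 : 0 < y1) (hmin : (y1 <= cb) || (n <= i1 + c)).

Definition X := y1 + (n - i1.+1).
Definition xd d := y1 + cb * d + (n - (i1 - c * d).+1).
Definition term (a b : seq nat) d :=
  (i1 - c * d).+1 <= M a u (relabel PI (xd d)) + M b (n - u) (relabel PB (xd d)).
Definition K := (i1 %/ c).+1.

Lemma dK d : d < K -> d * c <= i1.
Proof. by rewrite /K ltnS leq_divRL. Qed.

Lemma xdE d : d * c <= i1 -> xd d = X + e * d.
Proof.
move=> h; rewrite /xd /X.
have : cb * d + c * d = e * d by rewrite -mulnDl /cb subnK // ltnW.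
lia.
Qed.

Lemma max_trick (a b : seq nat) d : sorted geq a ->
  (forall x, 0 < M b (n - u) (relabel PB x) -> relabel PI x + size a <= u) ->
  (term a b d : nat) + ((i1 - c * d).+1 <= u - relabel PI (xd d)) =
  ((i1 - c * d).+1 <= u - relabel PI (xd d) + M b (n - u) (relabel PB (xd d))) +
  ((i1 - c * d).+1 <= M a u (relabel PI (xd d))).
Proof.
move=> ha hs; rewrite /term.
set t := (i1 - c * d).+1; set w := relabel PI (xd d).
set mB := M b (n - u) _; set mI := M a u w.
case: (posnP mB) => hmB.
  by rewrite hmB !addn0 addnC.
have h := hs _ hmB.
have -> : mI = u - w by apply: M_full => //; lia.
by rewrite addnC.
Qed.

Definition Th := i1.+1 + relabel PI X.

Lemma ThE d : d < K -> (i1 - c * d).+1 + relabel PI (xd d) = Th.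
Proof.
move=> hd; have h := dK hd; rewrite xdE // rI_add /Th; lia.
Qed.

Definition SQ (a : seq nat) d := (i1 - c * d < u) && (Th <= nth 0 a (i1 - c * d) + u).
Definition SP (b : seq nat) d := Th <= u + M b (n - u) (relabel PB (xd d)).

Lemma SQE (a : seq nat) d : sorted geq a -> d < K ->
  ((i1 - c * d).+1 <= M a u (relabel PI (xd d))) = SQ a d.
Proof.
move=> ha hd; have := ThE hd; rewrite M_ge // /SQ /=.
set i := i1 - c * d; set w := relabel PI _ => hT.
apply/andP/andP => -[h1 h2]; split; lia.
Qed.

Lemma SPE (a b : seq nat) d : d < K ->
  (forall x, 0 < M b (n - u) (relabel PB x) -> relabel PI x + size a <= u) ->
  ((i1 - c * d).+1 <= u - relabel PI (xd d) + M b (n - u) (relabel PB (xd d))) = SP b d.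
Proof.
move=> hd hs; have := ThE hd; rewrite /SP.
set i := i1 - c * d; set w := relabel PI _; set mB := M b _ _ => hT.
case: (leqP w u) => hw.
  apply/idP/idP; lia.
case: (posnP mB) => hmB.
  rewrite hmB; apply/idP/idP; lia.
have := hs _ hmB; rewrite -/w; lia.
Qed.

Lemma split_eq (a b : seq nat) : sorted geq a ->
  (forall x, 0 < M b (n - u) (relabel PB x) -> relabel PI x + size a <= u) ->
  count (term a b) (iota 0 K) +
  count (fun d => (i1 - c * d).+1 <= u - relabel PI (xd d)) (iota 0 K) =
  count (SP b) (iota 0 K) + count (SQ a) (iota 0 K).
Proof.
move=> ha hs.
rewrite (@count_add2 _ _ _
   (fun d => ((i1 - c * d).+1 <= u - relabel PI (xd d) + M b (n - u) (relabel PB (xd d))))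
   (fun d => ((i1 - c * d).+1 <= M a u (relabel PI (xd d))))); last first.
  by move=> d; apply: max_trick.
congr (_ + _); apply: eq_in_count => d; rewrite mem_iota => /andP[_ hd].
  exact: (SPE (a:=a) hd hs).
exact: SQE.
Qed.

Lemma ind_split z B B' : B' <= B ->
  ((z <= B) : nat) = (z <= B') + ((B' < z) && (z <= B)).
Proof. by move=> h; case: (leqP z B') => h1; case: (leqP z B) => h2 //=; lia. Qed.

Lemma ind_split2 i a c0 : ((i < a + c0) : nat) = (i < a) + ((a <= i) && (i < a + c0)).
Proof. by case: (ltnP i a) => h1; case: (ltnP i (a + c0)) => h2 //=; lia. Qed.

Lemma rBxd d : d < K -> relabel PB (xd d) = relabel PB X + d * cb.
Proof. move=> hd; rewrite xdE ?rB_add //; exact: dK. Qed.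

Lemma hcb0 : 0 < cb.
Proof. rewrite /cb; lia. Qed.

Lemma caseA : Th <= u ->
  count (SP be) (iota 0 K) + count (SQ al) (iota 0 K) =
  count (SP be') (iota 0 K) + count (SQ al') (iota 0 K).
Proof.
move=> hT; congr (_ + _); apply: eq_count => d; rewrite /SP /SQ.
  by rewrite !(leq_trans hT (leq_addr _ _)).
by rewrite !(leq_trans hT (leq_addl _ _)).
Qed.

Lemma caseB : u + s < Th ->
  count (SP be) (iota 0 K) + count (SQ al) (iota 0 K) =
  count (SP be') (iota 0 K) + count (SQ al') (iota 0 K).
Proof.
move=> hT; set th := Th - u.
have hth : 0 < th by rewrite /th; lia.
congr (_ + _); apply: eq_count => d; rewrite /SP /SQ.
  have E : forall b : seq nat, (Th <= u + M b (n - u) (relabel PB (xd d))) =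
     (th <= M b (n - u) (relabel PB (xd d))).
    by move=> b; rewrite /th; apply/idP/idP; lia.
  rewrite !E !M_ge // hbenth.
  have -> : (th.-1 < s) = false by apply/negbTE; rewrite -leqNgt; lia.
  by [].
have E : forall a : seq nat, (Th <= nth 0 a (i1 - c * d) + u) = (th <= nth 0 a (i1 - c * d)).
  by move=> a; rewrite /th; apply/idP/idP; lia.
rewrite !E !prefix_count // hcnt //.
have -> : (th <= s) = false by apply/negbTE; rewrite -ltnNge; lia.
by rewrite mul0n addn0.
Qed.

Lemma caseC : u < Th -> Th <= u + s ->
  count (SP be) (iota 0 K) + count (SQ al) (iota 0 K) =
  count (SP be') (iota 0 K) + count (SQ al') (iota 0 K).
Proof.
move=> hT1 hT2; set th := Th - u; set N := n - u.
have hth1 : 0 < th by rewrite /th; lia.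
have hths : th <= s by rewrite /th; lia.
set a := count (fun x => th <= x) al.
have ha_sz : a <= size al by apply: count_size.
have ha'_sz : a + c <= u.
  have := hcnt hth1; rewrite hths mul1n -/a => <-.
  exact: leq_trans (count_size _ _) hszal'.
set B := nth 0 be th.-1 + (N - th).
have hbeth : cb <= nth 0 be th.-1.
  have := sorted_geq_nth hbe (i:=th.-1) (j:=s.-1) ltac:(lia); lia.
have hBcb : cb <= B by rewrite /B; lia.
have SQa : forall d, SQ al d = (i1 - c * d < a).
  move=> d; rewrite /SQ.
  have -> : (Th <= nth 0 al (i1 - c * d) + u) = (th <= nth 0 al (i1 - c * d)).
    by rewrite /th; apply/idP/idP; lia.
  rewrite prefix_count // -/a.
  case: (ltnP (i1 - c * d) a) => h; last by rewrite andbF.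
  by rewrite (leq_trans h (leq_trans ha_sz hszal)).
have SQa' : forall d, SQ al' d = (i1 - c * d < a + c).
  move=> d; rewrite /SQ.
  have -> : (Th <= nth 0 al' (i1 - c * d) + u) = (th <= nth 0 al' (i1 - c * d)).
    by rewrite /th; apply/idP/idP; lia.
  rewrite prefix_count // hcnt // hths mul1n -/a.
  case: (ltnP (i1 - c * d) (a + c)) => h; last by rewrite andbF.
  by rewrite (leq_trans h ha'_sz).
have SPE1 : forall (b : seq nat) d, sorted geq b -> SP b d =
   (relabel PB (xd d) <= nth 0 b th.-1 + (N - th)).
  move=> b d hb; rewrite /SP.
  have -> : (Th <= u + M b (n - u) (relabel PB (xd d))) = (th <= M b N (relabel PB (xd d))).
    by rewrite /th /N; apply/idP/idP; lia.
  rewrite M_ge //.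
  have h0 : th != 0 by rewrite -lt0n.
  have hN : th <= N by rewrite /N; lia.
  by rewrite (negbTE h0) hN.
have SPb : forall d, SP be d = (relabel PB (xd d) <= B).
  by move=> dd; rewrite SPE1.
have SPb' : forall d, SP be' d = (relabel PB (xd d) <= B - cb).
  move=> d; rewrite SPE1 // hbenth.
  have -> : (th.-1 < s) = true by lia.
  by rewrite /B; congr (_ <= _); lia.
rewrite (eq_count SQa) (eq_count SQa') (eq_count SPb) (eq_count SPb').
rewrite (count_addP (b := fun d => relabel PB (xd d) <= B - cb)
   (c := fun d => (B - cb < relabel PB (xd d)) && (relabel PB (xd d) <= B))); last first.
  by move=> d; apply: ind_split; lia.
rewrite [count (fun d => i1 - c * d < a + c) _](count_addP
   (b := fun d => i1 - c * d < a)
   (c := fun d => (a <= i1 - c * d) && (i1 - c * d < a + c))); last first.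
  by move=> d; apply: ind_split2.
have hsplitX : relabel PI X + relabel PB X = X := relabel_split PI X.
have hthd : th + u = i1.+1 + relabel PI X by move: hT1; rewrite /th /Th; lia.
have hMpos : forall x, relabel PB x <= B -> 0 < M be N (relabel PB x).
  move=> x hx; rewrite M_ge //=; apply/andP; split; first by rewrite /N; lia.
  have := sorted_geq_nth hbe (i:=0) (j:=th.-1) (leq0n _); rewrite /B in hx; lia.
have hrBX : relabel PB X <= B.
  have hThn : Th <= n by lia.
  case/orP: hmin => hm.
    have hX : X = y1 + (n - i1.+1) by [].
    rewrite /B /N.
    have : th <= n - u by lia.
    lia.
  have hrI : relabel PI X < c by move: hT2; rewrite /Th; lia.
  have hXe : X <= e.
    rewrite leqNgt; apply/negP => hXe.
    have := relabel_mono PI (ltnW hXe); rewrite /relabel hc -/(relabel PI X); lia.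
  have := relabel_mono PB hXe; rewrite [X in _ <= X -> _]/relabel hcb; lia.
have hai1 : a <= i1.
  have := hsep (hMpos _ hrBX); move: hT1; rewrite /Th; lia.
set m := B - relabel PB X.
set d1 := m %/ cb.
have hd1K : d1 < K.
  have h1 : relabel PB (X + e * d1) <= B.
    rewrite rB_add; have := leq_trunc_div m cb; rewrite -/d1 /m; lia.
  have := hsep (hMpos _ h1); rewrite rI_add.
  move=> h2; rewrite /K ltnS leq_divRL //; move: hT1; rewrite /Th; lia.
have P1 : count (fun d => (B - cb < relabel PB (xd d)) && (relabel PB (xd d) <= B)) (iota 0 K) = 1.
  apply: (count_one hd1K) => d hd; rewrite rBxd //.
  have E := divn_eq m cb; have hr := ltn_pmod m hcb0.
  rewrite -/d1 in E; set r := m %% cb in E hr.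
  apply: (arith1 _ hcb0 hBcb hrBX _ hr); rewrite -/m; exact: E.
have P2 : count (fun d => (a <= i1 - c * d) && (i1 - c * d < a + c)) (iota 0 K) = 1.
  set q := (i1 - a) %/ c.
  have hqK : q < K by rewrite /K ltnS leq_div2r // leq_subr.
  apply: (count_one hqK) => d hd; have hdc := dK hd.
  have E := divn_eq (i1 - a) c; have hr := ltn_pmod (i1 - a) hc0.
  rewrite -/q in E; set r := (i1 - a) %% c in E hr.
  exact: (@arith2 c d q r a i1 hc0 hr E hdc hai1).
lia.
Qed.

Lemma core_eq : count (term al be) (iota 0 K) = count (term al' be') (iota 0 K).
Proof.
have E1 := split_eq hal hsep.
have E2 := split_eq hal' hsep'.
suff : count (SP be) (iota 0 K) + count (SQ al) (iota 0 K) =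
       count (SP be') (iota 0 K) + count (SQ al') (iota 0 K) by lia.
case: (leqP Th u) => h1; first exact: caseA.
case: (leqP Th (u + s)) => h2; first exact: caseC.
exact: caseB.
Qed.

End Core.

Module LadderM.
Import GRing.Theory Num.Theory.

Section Ladder.
Variables (e c n : nat) (r c' : int).
Hypotheses (hc0 : 0 < c) (hce : c < e).

Definition onL (i y : nat) : Prop := exists k : int,
  Posz i.+1 = (r + k * (Posz (e - c) - Posz e))%R /\ Posz y = (c' + k * Posz (e - c))%R.

Lemma onL_inl i j : in_ladder e (e - c) r c' (Posz i.+1, Posz j.+1) = `[< onL i j.+1 >].
Proof. by []. Qed.

Variables (i1 y1 : nat).
Hypothesis hon1 : onL i1 y1.
Hypothesis hy1 : 0 < y1.
Hypothesis hmax : forall i y, i < n -> 0 < y -> onL i y -> i <= i1.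

Lemma onL_char i y : i < n -> 0 < y -> onL i y ->
  exists d, [/\ i = i1 - c * d, y = y1 + (e - c) * d & c * d <= i1].
Proof.
move=> hin hy h; have hle := hmax hin hy h.
case: hon1 => k1 [h1a h1b]; case: h => k [ha hb].
have hD : (0 <= k - k1)%R.
  have : (Posz i1 - Posz i = (k - k1) * Posz c)%R by lia.
  nia.
exists `|k - k1|%N.
have E : Posz `|k - k1|%N = (k - k1)%R by rewrite gez0_abs.
split.
- have : (Posz i1 - Posz i = (k - k1) * Posz c)%R by lia.
  rewrite -E; nia.
- have : (Posz y - Posz y1 = (k - k1) * Posz (e - c))%R by lia.
  rewrite -E; nia.
- have : (Posz i1 - Posz i = (k - k1) * Posz c)%R by lia.
  rewrite -E; nia.
Qed.

Lemma onL_back d : c * d <= i1 -> onL (i1 - c * d) (y1 + (e - c) * d).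
Proof.
move=> hd; case: hon1 => k1 [h1a h1b].
have EX : (Posz (e - c) - Posz e = - Posz c)%R by lia.
have E2 : Posz (i1 - c * d).+1 = (Posz i1.+1 - Posz c * Posz d)%R by lia.
have E3 : Posz (y1 + (e - c) * d) = (Posz y1 + Posz (e - c) * Posz d)%R by lia.
exists (k1 + Posz d)%R; split.
  by rewrite EX in h1a *; rewrite E2 h1a; ring.
by rewrite E3 h1b; ring.
Qed.

Lemma anchor_min : (y1 <= e - c) || (n <= i1 + c).
Proof.
apply/orP; case: (leqP y1 (e - c)) => h; [by left | right].
rewrite leqNgt; apply/negP => hn.
have : onL (i1 + c) (y1 - (e - c)).
  case: hon1 => k1 [h1a h1b].
  have EX : (Posz (e - c) - Posz e = - Posz c)%R by lia.
  have E2 : Posz (i1 + c).+1 = (Posz i1.+1 + Posz c)%R by lia.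
  have E3 : Posz (y1 - (e - c)) = (Posz y1 - Posz (e - c))%R by lia.
  exists (k1 - 1)%R; split.
    by rewrite EX in h1a *; rewrite E2 h1a; ring.
  by rewrite E3 h1b; ring.
have hpos : 0 < y1 - (e - c) by lia.
move/(hmax hn hpos); lia.
Qed.

Lemma ladder_count (la : seq nat) : size la <= n ->
  count (in_ladder e (e - c) r c') (nodes la) =
  count (fun d => y1 + (e - c) * d <= nth 0 la (i1 - c * d)) (iota 0 (K c i1)).
Proof.
move=> hsz.
set Q := fun d => y1 + (e - c) * d <= nth 0 la (i1 - c * d).
set g := fun d => (Posz (i1 - c * d).+1, Posz (y1 + (e - c) * d)).
rewrite -!size_filter -(size_map g).
apply: perm_size; apply: uniq_perm.
- apply: filter_uniq; apply: allpairs_uniq_dep.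
  + exact: iota_uniq.
  + move=> i _; exact: iota_uniq.
  + move=> [a1 b1] [a2 b2] _ _ /= [] ha hb.
    have ha' : a1 = a2 by lia.
    have hb' : b1 = b2 by lia.
    subst a2; by rewrite hb'.
- rewrite map_inj_in_uniq; first by apply: filter_uniq; exact: iota_uniq.
  move=> d1 d2 _ _ [] _ h.
  have : (e - c) * d1 = (e - c) * d2 by lia.
  move/eqP; rewrite eqn_mul2l; case/orP => /eqP //; lia.
- move=> [a b]; rewrite mem_filter; apply/andP/mapP.
  + case=> hL /allpairsPdep[i [j [hi hj [ha hb]]]]; subst a b.
    rewrite mem_iota in hi; rewrite mem_iota in hj.
    move: hL; rewrite onL_inl => /asboolP hL.
    have [d [hid hyd hcd]] := onL_char (i:=i) ltac:(lia) (ltn0Sn _) hL.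
    exists d; last by rewrite /g -hid -hyd.
    rewrite mem_filter mem_iota /= /K ltnS leq_divRL // mulnC hcd andbT /Q -hyd -hid.
    lia.
  + case=> d; rewrite mem_filter mem_iota => /andP[hQ /andP[_ hd]] [-> ->].
    have hcd : c * d <= i1 by move: hd; rewrite /K ltnS leq_divRL // mulnC.
    split.
      have hpos : 0 < y1 + (e - c) * d by rewrite addn_gt0 hy1.
      move: (onL_back hcd); rewrite -(prednK hpos) onL_inl => h; exact/asboolP.
    apply/allpairsPdep; exists (i1 - c * d), (y1 + (e - c) * d - 1).
    rewrite !mem_iota /=; split => //.
    * rewrite add0n; case: (ltnP (i1 - c * d) (size la)) => // hge.
      move: hQ; rewrite /Q /= nth_default //; set t := (e - c) * d; lia.
    * move: hQ; rewrite /Q /= add0n; set t := (e - c) * d; lia.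
    * by rewrite /g; congr (_, _); congr Posz; set t := (e - c) * d; lia.
Qed.

End Ladder.

End LadderM.
Import LadderM.

Lemma abacus_row (I : pred int) n la y i : is_partition la -> size la <= n -> i < n ->
  (y <= nth 0 la i) =
  (i.+1 <= M (I_part I n la) (count (inI I) (display n la)) (relabel (inI I) (y + (n - i.+1))) +
           M (barI_part I n la) (n - count (inI I) (display n la))
             (relabel (PB (inI I)) (y + (n - i.+1)))).
Proof.
move=> hla hsz hi; rewrite (row_ge hla hsz) //.
set x := y + (n - i.+1); set D := display n la.
have -> : count (fun p => x <= p) D =
   count (fun p => inI I p && (x <= p)) D + count (fun p => PB (inI I) p && (x <= p)) D.
  by apply: count_addP => p; rewrite /PB /=; case: (inI I p); rewrite /= ?addn0.
rewrite !(split_count hla hsz).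
have -> : count (PB (inI I)) D = n - count (inI I) D.
  have := count_predC (inI I) D; rewrite /D display_size // /PB; lia.
by [].
Qed.

Lemma relab_sorted (P : pred nat) n la : is_partition la -> size la <= n ->
  sorted gtn [seq relabel P p | p <- display n la & P p].
Proof.
move=> hla hsz; rewrite sorted_map.
apply: (@sub_in_sorted _ P gtn).
- move=> a b ha hb /= hab.
  have hb' : P b := hb.
  have := relabel_mono P hab; rewrite relabelS hb' addn1 /=; lia.
- exact: filter_all.
- apply: sorted_filter; last exact: display_sorted.
  by move=> a b c /= h1 h2; apply: ltn_trans h2 h1.
Qed.

Lemma Ipart_sorted (I : pred int) n la : is_partition la -> size la <= n ->
  sorted geq (I_part I n la).
Proof. by move=> hla hsz; apply: pob_sorted; apply: relab_sorted. Qed.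

Lemma bIpart_sorted (I : pred int) n la : is_partition la -> size la <= n ->
  sorted geq (barI_part I n la).
Proof. by move=> hla hsz; apply: pob_sorted; apply: (relab_sorted (predC (inI I))). Qed.

Lemma Isize (I : pred int) n la : size (I_part I n la) <= count (inI I) (display n la).
Proof. by apply: leq_trans (pob_size _) _; rewrite size_map size_filter. Qed.

Lemma MB_eq (I : pred int) n la x : is_partition la -> size la <= n ->
  M (barI_part I n la) (n - count (inI I) (display n la)) (relabel (PB (inI I)) x) =
  count (fun p => PB (inI I) p && (x <= p)) (display n la).
Proof.
move=> hla hsz; rewrite (split_count hla hsz).
have -> : count (PB (inI I)) (display n la) = n - count (inI I) (display n la).
  have := count_predC (inI I) (display n la); rewrite display_size // /PB; lia.
by [].
Qed.

Lemma MI_eq (I : pred int) n la x : is_partition la -> size la <= n ->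
  M (I_part I n la) (count (inI I) (display n la)) (relabel (inI I) x) =
  count (fun p => inI I p && (x <= p)) (display n la).
Proof. by move=> hla hsz; rewrite (split_count hla hsz). Qed.

Lemma sep_nu (I : pred int) n la : is_partition la -> size la <= n -> I_separated I n la ->
  forall x, 0 < M (barI_part I n la) (n - count (inI I) (display n la)) (relabel (PB (inI I)) x) ->
  relabel (inI I) x + size (I_part I n la) <= count (inI I) (display n la).
Proof.
move=> hla hsz hsep x; rewrite MB_eq // -has_count => /hasP[q hqD /andP[hq hxq]].
set D := display n la; set u := count (inI I) D; set w := relabel (inI I) x.
rewrite leqNgt; apply/negP => hw.
suff [p [hpx hpI hpD]] : exists p, [/\ p < x, inI I p & p \notin D].
  have := hsep p q hpI hpD hq hqD; lia.
apply: contrapT => hall.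
have hin : forall p, p < x -> inI I p -> p \in D.
  move=> p h1 h2; apply: contrapT => h3; apply: hall; exists p; split => //; exact/negP.
have h1 : w <= count (fun p => inI I p && (p < x)) D.
  rewrite -size_filter /w /relabel -size_filter.
  apply: uniq_leq_size; first by apply: filter_uniq; exact: iota_uniq.
  move=> p; rewrite !mem_filter mem_iota /= => /andP[hp hpx].
  by rewrite hp hpx hin.
have h2 : count (fun p => inI I p && (p < x)) D + count (fun p => inI I p && (x <= p)) D = u.
  rewrite /u -(count_addP (a := inI I)) // => p.
  by case: (inI I p); case: (ltnP p x).
have hszu : size (I_part I n la) <= u by apply: Isize.
have h3 : u - w + 1 <= count (fun p => inI I p && (x <= p)) D.
  rewrite -(@MI_eq I n la x hla hsz) M_ge; last exact: Ipart_sorted.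
  rewrite -/D -/u -/w; apply/orP; right; apply/andP; split; first lia.
  have hlt : u - w < size (I_part I n la) by lia.
  have := pob_pos hlt.
  have -> : (u - w + 1).-1 = u - w by lia.
  move=> hpos; have hpos2 : 0 < nth 0 (I_part I n la) (u - w) := hpos; lia.
lia.
Qed.

Lemma parcat_count (c s : nat) (al : seq nat) th :
  count (fun x => th <= x) (parcat c [:: s] al) = count (fun x => th <= x) al + (th <= s) * c.
Proof.
rewrite /parcat.
set L := al ++ _.
have hp : perm_eq (sort geq L) L by rewrite perm_sort perm_refl.
rewrite (permP hp) /L count_cat /= cats0 count_nseq.
by [].
Qed.

Lemma parcat_size (c s : nat) (al : seq nat) : size (parcat c [:: s] al) = size al + c.
Proof. by rewrite /parcat size_sort size_cat /= cats0 size_nseq. Qed.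

Lemma tau_nth (cb s : nat) (be : seq nat) i : sorted geq be -> s <= size be -> 0 < s ->
  cb + nth 0 be s <= nth 0 be s.-1 ->
  nth 0 (tau cb s be) i = if i < s then nth 0 be i - cb else nth 0 be i.
Proof.
move=> hbe hs hs0 hgap; rewrite /tau filter_pos_nth.
  case: (ltnP i (size be)) => hi.
    by rewrite (nth_map 0) ?size_iota // nth_iota.
  rewrite nth_default ?size_map ?size_iota //.
  have -> : i < s = false by apply/negbTE; rewrite -leqNgt; lia.
  by rewrite nth_default.
apply: sorted_iota_geq => j _ hj; rewrite add0n in hj.
have := sorted_geq_nth hbe (leqnSn j).
case: (ltnP j.+1 s) => h1.
  rewrite (ltnW h1); lia.
case: (ltnP j s) => h2; last by [].
have hs' : s = j.+1 by lia.
subst s; move: hgap => /= hg _; lia.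
Qed.

Lemma card_count (e : nat) (I : pred int) :
  #|[set i : 'I_e | I (Posz (nat_of_ord i))]| = count (inI I) (iota 0 e).
Proof.
rewrite -sum1_card (eq_bigl (fun i : 'I_e => inI I i)); last by move=> i; rewrite inE.
rewrite -(big_mkord (fun i => inI I i) (fun _ => 1)) sum1_count.
by rewrite /index_iota subn0.
Qed.

Theorem mainTheorem17 (e c n u : nat) (I : pred int) (nu xi : seq nat) (s : nat) :
  4 <= e ->
  (forall z : int, I (z + Posz e)%R = I z) ->
  #|[set i : 'I_e | I (Posz (nat_of_ord i))]| = c ->
  2 <= c <= e - 2 ->
  e %| n ->
  u <= n ->
  is_partition nu -> size nu <= n ->
  uI_partition I n u nu ->
  I_separated I n nu ->
  1 <= s ->
  e - c <= pt (barI_part I n nu) s - pt (barI_part I n nu) s.+1 ->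
  (forall r, 1 <= r < s ->
     pt (barI_part I n nu) r - pt (barI_part I n nu) r.+1 < e - c) ->
  is_partition xi -> size xi <= n ->
  uI_partition I n u xi ->
  I_part I n xi = parcat c [:: s] (I_part I n nu) ->
  barI_part I n xi = tau (e - c) s (barI_part I n nu) ->
  ladder_equiv e (e - c) nu xi.
Proof.
move=> he hper hcard hc2 hen hun hpnu hsznu hunu hsep hs1 hgap _ hpxi hszxi huxi hIxi hBxi.
have hPI : forall p, inI I (p + e) = inI I p by move=> p; rewrite /inI PoszD hper.
have hc : count (inI I) (iota 0 e) = c by rewrite -card_count.
have hce : c < e by lia.
have hc0 : 0 < c by lia.
set al := I_part I n nu; set be := barI_part I n nu.
set al' := I_part I n xi; set be' := barI_part I n xi.
have Hu : count (inI I) (display n nu) = u := hunu.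
have Hu' : count (inI I) (display n xi) = u := huxi.
have hal : sorted geq al by apply: Ipart_sorted.
have hbe : sorted geq be by apply: bIpart_sorted.
have hal' : sorted geq al' by apply: Ipart_sorted.
have hbe' : sorted geq be' by apply: bIpart_sorted.
have hszal : size al <= u by rewrite -Hu; apply: Isize.
have hszal' : size al' <= u by rewrite -Hu'; apply: Isize.
have hszbe : size be <= n - u.
  apply: leq_trans (pob_size _) _; rewrite size_map size_filter.
  have := count_predC (inI I) (display n nu); rewrite display_size Hu.
  have -> : count (fun p => ~~ inI I p) (display n nu) = count (predC (inI I)) (display n nu) by apply: eq_count.
  lia.
move: hgap; rewrite /pt /= -/be => hgap.
have hbes : 0 < nth 0 be s.-1 by lia.
have hsbe : s <= size be.
  case: (ltnP s.-1 (size be)) => h; first lia.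
  by move: hbes; rewrite nth_default.
have hsN : s <= n - u by lia.
have hgap' : cb e c + nth 0 be s <= nth 0 be s.-1 by rewrite /cb; lia.
have hbenth : forall i, nth 0 be' i = if i < s then nth 0 be i - cb e c else nth 0 be i.
  by move=> i; rewrite /be' hBxi tau_nth.
have hcnt : forall th, 0 < th ->
    count (fun x => th <= x) al' = count (fun x => th <= x) al + (th <= s) * c.
  by move=> th _; rewrite /al' hIxi parcat_count.
have hsep0 : forall x, 0 < M be (n - u) (relabel (PB (inI I)) x) ->
    relabel (inI I) x + size al <= u.
  by move=> x; have := @sep_nu I n nu hpnu hsznu hsep x; rewrite Hu.
have hsep' : forall x, 0 < M be' (n - u) (relabel (PB (inI I)) x) ->
    relabel (inI I) x + size al' <= u.
  move=> x hx; rewrite /al' hIxi parcat_size -/al.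
  have hb0 : cb e c <= nth 0 be 0.
    have := sorted_geq_nth hbe (leq0n s.-1); lia.
  have h1 : 0 < M be (n - u) (relabel (PB (inI I)) (x + e * 1)).
    move: hx; rewrite !M_ge //= hbenth hs1 (@rB_add e c n u (inI I) hPI hc hce hc0 hun x 1).
    move=> /andP[h1 h2]; apply/andP; split => //; lia.
  have := hsep0 _ h1; rewrite (@rI_add e c (inI I) hPI hc x 1); lia.
move=> r c'.
case: (pselect (exists i y, [/\ i < n, 0 < y & onL e c r c' i y])) => [hex|hnone].
  set P := fun i => `[< exists y, 0 < y /\ onL e c r c' i y >] && (i < n).
  have exP : exists i, P i.
    case: hex => i [y [hi hy ho]]; exists i; rewrite /P hi andbT; apply/asboolP; by exists y.
  have ub : forall i, P i -> i <= n by move=> i /andP[_ h]; lia.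
  case: (ex_maxnP exP ub) => i1 /andP[/asboolP [y1 [hy1 hon1]] hi1] hmaxP.
  have hmax : forall i y, i < n -> 0 < y -> onL e c r c' i y -> i <= i1.
    move=> i y hi hy ho; apply: hmaxP; rewrite /P hi andbT; apply/asboolP; by exists y.
  rewrite (ladder_count hc0 hce hon1 hy1 hmax hsznu) (ladder_count hc0 hce hon1 hy1 hmax hszxi).
  have E : forall la, is_partition la -> size la <= n -> count (inI I) (display n la) = u ->
     {in iota 0 (K c i1), (fun d => y1 + (e - c) * d <= nth 0 la (i1 - c * d)) =1
        term e c n u (inI I) i1 y1 (I_part I n la) (barI_part I n la)}.
    move=> la hla hsz hu d _.
    rewrite /= (@abacus_row I n la (y1 + (e - c) * d) (i1 - c * d) hla hsz) ?hu; last lia.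
    by rewrite /term /xd /cb.
  rewrite (eq_in_count (E nu hpnu hsznu Hu)) (eq_in_count (E xi hpxi hszxi Hu')).
  apply: (core_eq hPI hc hce hc0 hun hal hbe hal' hbe' hszal hszal' hsep0 hsep' hcnt hbenth
           hs1 hsN hgap' hi1 hy1).
  exact: (anchor_min hc0 hce hon1 hy1 hmax).
have Z : forall la, size la <= n -> count (in_ladder e (e - c) r c') (nodes la) = 0.
  move=> la hsz; apply/eqP; rewrite -leqn0 leqNgt -has_count; apply/hasP => -[x].
  move=> /allpairsPdep[i [j [hi hj ->]]]; rewrite onL_inl => /asboolP ho.
  apply: hnone; exists i, j.+1; split => //.
  rewrite mem_iota in hi; lia.
by rewrite !Z.
Qed.
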